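(* A weighted pushdown system $\mathcal{A}$ has a good cycle (reachable from the initial configuration) if and only if its summary graph $\mathrm{Gr}(\mathcal{A})$ has a positive simple cycle (reachable from $(q_0,\bot)$).
   Context: A weighted pushdown system (WPS) is $\mathcal{A}=\langle Q,\Gamma,q_0,E,w\rangle$ with finite states $Q$, finite stack alphabet $\Gamma\ni\bot$ ($\bot$ never pushed or popped), edges $E\subseteq(Q\times\Gamma)\times(Q\times\mathrm{Com}(\Gamma))$, $\mathrm{Com}(\Gamma)=\{\mathit{skip},\mathit{pop}\}\cup\{\mathit{push}(z)\}$, weights $w:E\to\mathbb{Z}$; initial configuration $(\bot,q_0)$. Configurations $(\alpha,q)$, $\alpha\in\Gamma^+$; successor via an edge $(q,\mathrm{Top}(\alpha),q',\mathit{com})$ yields $(\mathit{com}(\alpha),q')$. A configuration $(\alpha_i,q_i)$ in a path is a local minimum if $\alpha_i$ is a prefix of all later stacks in the path. A good cycle is a finite path $\langle(\alpha_1,q_1),\dots,(\alpha_n,q_n)\rangle$ of positive weight whose first configuration is a local minimum, with $q_1=q_n$ and $\mathrm{Top}(\alpha_1)=\mathrm{Top}(\alpha_n)$. A path from $(\alpha\gamma,q_1)$ is non-decreasing if its first configuration is a local minimum. The summary function $s(q_1,\gamma,q_2)$ equals $\omega$ if non-decreasing paths from $(\bot\gamma,q_1)$ to $(\bot\gamma,q_2)$ of arbitrarily large weight exist, else the maximum weight of such a path, and $-\infty$ if none exists. The summary graph $\mathrm{Gr}(\mathcal{A})$ has vertices $Q\times\Gamma$ and edges: $((q_1,\gamma),(q_2,\gamma))$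 with weight $s(q_1,\gamma,q_2)$ whenever $s(q_1,\gamma,q_2)>-\infty$, and $((q_1,\gamma_1),(q_2,\gamma_2))$ with weight $w(e)$ for every edge $e=(q_1,\gamma_1,q_2,\mathit{push}(\gamma_2))\in E$. A simple cycle of $\mathrm{Gr}(\mathcal{A})$ is positive if it contains an edge of weight $\omega$ or its total weight is positive. *)

(* Defs.v *)
From HB Require Import structures.
From mathcomp Require Import all_boot all_order all_algebra.
Set Implicit Arguments. Unset Strict Implicit. Unset Printing Implicit Defensive.
Import Order.TTheory GRing.Theory Num.Theory.
Local Open Scope ring_scope.

Inductive com (G : Type) := Skip | Pop | Push of G.
Arguments Skip {G}. Arguments Pop {G}.

Record edge (Q G : Type) := Edge { esrc : Q; etop : G; edst : Q; ecom : com G }.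

Record wps (Q G : finType) := WPS {
  bot : G;
  q0 : Q;
  E : edge Q G -> bool;
  w : edge Q G -> int }.

Section WPS.
Variables (Q G : finType) (A : wps Q G).

Definition wf_wps : Prop :=
  forall e, E A e -> ecom e <> Push (bot A) /\ (etop e = bot A -> ecom e <> Pop).

(* Stacks are written bottom-first; the top is the last symbol. *)
Definition cfg := (seq G * Q)%type.
Definition top (s : seq G) : G := last (bot A) s.
Definition apply_com (c : com G) (s : seq G) : seq G :=
  match c with
  | Skip => s
  | Pop => take (size s).-1 s
  | Push z => rcons s z
  end.

Definition step (c : cfg) (e : edge Q G) (c' : cfg) : Prop :=
  [/\ E A e, esrc e = c.2, etop e = top c.1, edst e = c'.2 & c'.1 = apply_com (ecom e) c.1].

(* A path from c: the sequence of (edge taken, configuration reached). *)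
Fixpoint is_run (c : cfg) (r : seq (edge Q G * cfg)) : Prop :=
  match r with
  | [::] => True
  | (e, c') :: r' => step c e c' /\ is_run c' r'
  end.

Definition run_end (c : cfg) (r : seq (edge Q G * cfg)) : cfg := last c (map snd r).
Definition run_weight (r : seq (edge Q G * cfg)) : int := \sum_(p <- r) w A p.1.

Definition first_local_min (c : cfg) (r : seq (edge Q G * cfg)) : bool :=
  all (fun c' : cfg => prefix c.1 c'.1) (map snd r).

Definition init : cfg := ([:: bot A], q0 A).

Definition reachable (c : cfg) : Prop :=
  exists r, is_run init r /\ run_end init r = c.

Definition good_cycle (c : cfg) (r : seq (edge Q G * cfg)) : Prop :=
  [/\ is_run c r, 0 < run_weight r, first_local_min c r,
      (run_end c r).2 = c.2 & top (run_end c r).1 = top c.1].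

Definition has_reachable_good_cycle : Prop :=
  exists c r, reachable c /\ good_cycle c r.

Inductive ext := Omega | Fin of int.

Definition nd_path (q1 : Q) (g : G) (q2 : Q) (r : seq (edge Q G * cfg)) : Prop :=
  [/\ is_run ([:: bot A; g], q1) r, first_local_min ([:: bot A; g], q1) r
    & run_end ([:: bot A; g], q1) r = ([:: bot A; g], q2)].

(* summary_is q1 g q2 v  <->  s(q1, g, q2) = v  (and s(q1,g,q2) > -oo) *)
Definition summary_is (q1 : Q) (g : G) (q2 : Q) (v : ext) : Prop :=
  match v with
  | Omega => forall n : int, exists r, nd_path q1 g q2 r /\ n <= run_weight r
  | Fin m => (exists r, nd_path q1 g q2 r /\ run_weight r = m) /\
             (forall r, nd_path q1 g q2 r -> run_weight r <= m)
  end.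

Definition gr_edge (u v : Q * G) (x : ext) : Prop :=
  (u.2 = v.2 /\ summary_is u.1 u.2 v.1 x) \/
  (E A (Edge u.1 u.2 v.1 (Push v.2)) /\ x = Fin (w A (Edge u.1 u.2 v.1 (Push v.2)))).

Definition simple_cycle (vs : seq (Q * G)) (xs : seq ext) : Prop :=
  [/\ (0 < size vs)%N, size xs = size vs, uniq vs &
      forall i, (i < size vs)%N ->
        gr_edge (nth (q0 A, bot A) vs i) (nth (q0 A, bot A) vs (i.+1 %% size vs))
                (nth Omega xs i)].

Definition positive_cycle (xs : seq ext) : bool :=
  has (fun x => if x is Omega then true else false) xs ||
  (0 < \sum_(x <- xs) (if x is Fin m then m else 0)).

Inductive gr_reach : Q * G -> Q * G -> Prop :=
| gr_refl u : gr_reach u u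
| gr_step u v z x : gr_edge u v x -> gr_reach v z -> gr_reach u z.

Definition has_reachable_positive_simple_cycle : Prop :=
  exists vs xs, [/\ simple_cycle vs xs, positive_cycle xs &
                    exists2 v, v \in vs & gr_reach (q0 A, bot A) v].

End WPS.

(* Main.v *)
Require Import Defs.
From mathcomp Require Import all_boot all_order all_algebra.
From Stdlib Require Import Classical.
From mathcomp Require Import zify.
Set Implicit Arguments. Unset Strict Implicit. Unset Printing Implicit Defensive.
Import Order.TTheory GRing.Theory Num.Theory.
Local Open Scope ring_scope.

Section Proof5.
Variables (Q G : finType) (A : wps Q G).
Hypothesis HA : wf_wps A.

Local Notation cf := (cfg Q G).
Local Notation run := (seq (edge Q G * cfg Q G)).

Lemma my_catsI (T : Type) (s a b : seq T) : s ++ a = s ++ b -> a = b.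
Proof. by elim: s => //= x s IH [] /IH. Qed.

Lemma is_run_cat c (r1 r2 : run) :
  is_run A c (r1 ++ r2) <-> is_run A c r1 /\ is_run A (run_end c r1) r2.
Proof.
elim: r1 c => [|[e c'] r1 IH] c /=; first by tauto.
rewrite IH /run_end /=; tauto.
Qed.

Lemma run_end_cat c (r1 r2 : run) :
  run_end c (r1 ++ r2) = run_end (run_end c r1) r2.
Proof. by rewrite /run_end map_cat last_cat. Qed.

Lemma run_end_cons c p (r : run) : run_end c (p :: r) = run_end p.2 r.
Proof. by []. Qed.

Lemma run_weight_cat (r1 r2 : run) :
  run_weight A (r1 ++ r2) = run_weight A r1 + run_weight A r2.
Proof. by rewrite /run_weight big_cat. Qed.

Lemma run_weight_cons p (r : run) : run_weight A (p :: r) = w A p.1 + run_weight A r.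
Proof. by rewrite /run_weight big_cons. Qed.

Lemma run_weight_nil : run_weight A [::] = 0.
Proof. by rewrite /run_weight big_nil. Qed.

Lemma flm_cat c (r1 r2 : run) : first_local_min c (r1 ++ r2) =
  first_local_min c r1 && all (fun c' : cf => prefix c.1 c'.1) (map snd r2).
Proof. by rewrite /first_local_min map_cat all_cat. Qed.

Lemma top_catc s y u : top A (s ++ y :: u) = last y u.
Proof. by rewrite /top last_cat. Qed.

Lemma apply_com_cat c (s v : seq G) : v != [::] -> apply_com c (s ++ v) = s ++ apply_com c v.
Proof.
case: c => //=; last by move=> z _; rewrite rcons_cat.
case: v => // y u _; rewrite take_cat size_cat /= addnS /= ltnNge leq_addr /=.
by rewrite addKn.
Qed.

Definition rlc (n : nat) (s0' : seq G) (c : cf) : cf := (s0' ++ drop n c.1, c.2).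
Definition reloc n s0' (p : edge Q G * cf) := (p.1, rlc n s0' p.2).

Lemma prefix_rlc (s0 s0' u x : seq G) :
  prefix (s0 ++ u) x -> prefix (s0' ++ u) (s0' ++ drop (size s0) x).
Proof.
case/prefixP=> v ->; rewrite -catA drop_size_cat // catA; exact: prefix_prefix.
Qed.

Lemma reloc_run (s0 s0' : seq G) g c (r : run) :
  prefix (rcons s0 g) c.1 ->
  all (fun c' : cf => prefix (rcons s0 g) c'.1) (map snd r) ->
  is_run A c r -> is_run A (rlc (size s0) s0' c) (map (reloc (size s0) s0') r).
Proof.
elim: r c => [|[e c'] r IH] [st q] //=.
case: c' => st' q' /=.
move=> /prefixP [t ->] /andP [/prefixP [t' Ec'] Hall] [[HE Hs Ht Hd Hc] Hr].
split; last first.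
  by apply: IH => //=; rewrite Ec'; apply: prefix_prefix.
move: Ht Hc; rewrite Ec' /rlc /= !cat_rcons !drop_size_cat // top_catc => Ht.
rewrite apply_com_cat // => /my_catsI Hc.
split=> //=; first by rewrite top_catc.
by rewrite Hc apply_com_cat.
Qed.

Lemma reloc_end n s0' c (r : run) :
  run_end (rlc n s0' c) (map (reloc n s0') r) = rlc n s0' (run_end c r).
Proof. by rewrite /run_end -map_comp (eq_map (_ : snd \o reloc n s0' =1 rlc n s0' \o snd)) // map_comp last_map. Qed.

Lemma reloc_weight n s0' (r : run) : run_weight A (map (reloc n s0') r) = run_weight A r.
Proof. by rewrite /run_weight big_map. Qed.

Lemma reloc_flm (s0 s0' u : seq G) (r : run) :
  all (fun c' : cf => prefix (s0 ++ u) c'.1) (map snd r) ->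
  all (fun c' : cf => prefix (s0' ++ u) c'.1) (map snd (map (reloc (size s0) s0') r)).
Proof.
elim: r => //= [[e c']] r IH /= /andP [H1 H2].
by rewrite IH // andbT; apply: prefix_rlc.
Qed.


Lemma step_above (p : seq G) z u q e c' :
  step A (p ++ z :: u, q) e c' -> c'.1 != p -> prefix (rcons p z) c'.1.
Proof.
case=> _ _ _ _ ->; rewrite apply_com_cat //.
case: (ecom e) => [||y] /=.
- by move=> _; rewrite -cat_rcons prefix_prefix.
- case: u => [|y u] /=; first by rewrite cats0 eqxx.
  by move=> _; rewrite -cat_rcons prefix_prefix.
- by move=> _; rewrite -cat_rcons prefix_prefix.
Qed.

Lemma inv_above (p : seq G) z c (r : run) :
  is_run A c r -> prefix (rcons p z) c.1 ->
  all (fun c' : cf => c'.1 != p) (map snd r) ->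
  all (fun c' : cf => prefix (rcons p z) c'.1) (map snd r).
Proof.
elim: r c => //= [[e c']] r IH [st q] /= [Hs Hr] /prefixP [u Eu] /andP [Hne Hall].
rewrite Eu cat_rcons in Hs.
have H1 := step_above Hs Hne.
by rewrite H1 /=; apply: (IH c').
Qed.

Lemma first_push (p : seq G) q e c' :
  p != [::] -> step A (p, q) e c' -> prefix p c'.1 -> c'.1 != p ->
  exists z, ecom e = Push z /\ c'.1 = rcons p z.
Proof.
move=> Hp [_ _ _ _ ->]; case: (ecom e) => [||z] /=.
- by rewrite eqxx.
- move=> /size_prefix; rewrite size_takel ?leq_pred // => H _; exfalso.
  by case: p Hp H => //= a p' _; rewrite ltnn.
- by move=> _ _; exists z.
Qed.

Lemma bot_inv c (r : run) :
  is_run A c r -> prefix [:: bot A] c.1 ->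
  all (fun c' : cf => prefix [:: bot A] c'.1) (map snd r).
Proof.
elim: r c => //= [[e c']] r IH [st q] /= [Hs Hr] /prefixP [t Et].
suff H : prefix [:: bot A] c'.1 by rewrite H /=; apply: (IH c').
move: Hs => [HE _ Ht _ ->]; subst st.
have [Ht0|Ht0] := eqVneq t [::].
  move: Ht; rewrite Ht0 /top /= => Ht; subst t.
  have := HA HE; rewrite Ht => -[_ /(_ erefl) Hnp].
  by case: (ecom e) Hnp => [_|/(_ erefl) []|z _] /=; rewrite ?eqxx.
by rewrite apply_com_cat // prefix_prefix.
Qed.

Local Notation V := (Q * G)%type.

Fixpoint wpath (u : V) (ps : seq (V * ext)) : Prop :=
  match ps with [::] => True | (v, x) :: ps' => gr_edge A u v x /\ wpath v ps' end.
Definition wend (u : V) (ps : seq (V * ext)) := last u (map fst ps).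
Definition isO (x : ext) : bool := if x is Omega then true else false.
Definition finv (x : ext) : int := if x is Fin m then m else 0.
Definition wsum (ps : seq (V * ext)) := \sum_(x <- map snd ps) finv x.
Definition wge (ps : seq (V * ext)) (m : int) := has isO (map snd ps) || (m <= wsum ps).

Lemma wpath_cat u ps1 ps2 : wpath u (ps1 ++ ps2) <-> wpath u ps1 /\ wpath (wend u ps1) ps2.
Proof. elim: ps1 u => [|[v x] ps1 IH] u /=; first by tauto. rewrite IH /wend /=; tauto. Qed.

Lemma wend_cat u ps1 ps2 : wend u (ps1 ++ ps2) = wend (wend u ps1) ps2.
Proof. by rewrite /wend map_cat last_cat. Qed.

Lemma wsum_cat ps1 ps2 : wsum (ps1 ++ ps2) = wsum ps1 + wsum ps2.
Proof. by rewrite /wsum map_cat big_cat. Qed.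

Lemma wsum_cons p ps : wsum (p :: ps) = finv p.2 + wsum ps.
Proof. by rewrite /wsum /= big_cons. Qed.

Lemma wge_cons v x ps m1 m2 : (isO x || (m1 <= finv x)) -> wge ps m2 ->
  wge ((v, x) :: ps) (m1 + m2).
Proof.
rewrite /wge /= wsum_cons /=; case: (isO x) => //= H.
case: (has isO _) => //= H2; exact: lerD.
Qed.

Lemma int_max (P : int -> Prop) (n : int) : (forall x, P x -> x < n) ->
  forall m, P m -> exists y, P y /\ forall x, P x -> x <= y.
Proof.
move=> Hb.
suff H : forall k : nat, forall m, P m -> n - m <= k%:Z -> exists y, P y /\ forall x, P x -> x <= y.
  move=> m Pm; apply: (H `|n - m|%N m Pm); lia.
elim=> [|k IH] m Pm Hk.
  have := Hb m Pm; lia.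
case: (classic (exists x, P x /\ m < x)) => [[x [Px Hx]]|Hn].
  by apply: (IH x Px); lia.
exists m; split=> // x Px; rewrite leNgt; apply/negP => Hx; apply: Hn; by exists x.
Qed.

Lemma summary_exists q1 g q2 (r0 : run) : nd_path A q1 g q2 r0 ->
  exists v, summary_is A q1 g q2 v /\ (isO v || (run_weight A r0 <= finv v)).
Proof.
move=> Hr0.
case: (classic (forall n : int, exists r, nd_path A q1 g q2 r /\ n <= run_weight A r)) => H.
  by exists Omega.
have [n Hn] := not_all_ex_not _ _ H.
have Hb : forall x, (exists r, nd_path A q1 g q2 r /\ run_weight A r = x) -> x < n.
  move=> x [r [Hr <-]]; rewrite ltNge; apply/negP => Hle; apply: Hn; by exists r.
have [y [[ry [Hry Ey]] Hy]] := int_max Hb (ex_intro _ r0 (conj Hr0 erefl)).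
exists (Fin y); split.
  split; first by exists ry.
  by move=> r Hr; apply: Hy; exists r.
by apply: Hy; exists r0.
Qed.

Lemma split_last (T : Type) (P : pred T) (r : seq T) :
  all (predC P) r \/ exists r1 x r2, [/\ r = r1 ++ x :: r2, P x & all (predC P) r2].
Proof.
elim: r => [|a r [IH|[r1 [x [r2 [-> Px Hr2]]]]]]; first by left.
- case Pa: (P a); last by left; rewrite /= Pa.
  by right; exists [::], a, r.
- by right; exists (a :: r1), x, r2.
Qed.

Lemma rcons_nn (s : seq G) g : rcons s g != [::].
Proof. by case: s. Qed.

Lemma wge_nil : wge [::] 0.
Proof. by rewrite /wge /= /wsum big_nil. Qed.

Lemma decomp n : forall (r : run) (s : seq G) g q, (size r <= n)%N ->
  is_run A (rcons s g, q) r -> first_local_min (rcons s g, q) r ->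
  exists ps, [/\ wpath (q, g) ps,
     wend (q, g) ps = ((run_end (rcons s g, q) r).2, top A (run_end (rcons s g, q) r).1)
   & wge ps (run_weight A r)].
Proof.
elim: n => [|n IH] r s g q Hn Hr Hf.
  case: r Hn Hr Hf => // _ _ _; exists [::]; split => //.
    by rewrite /wend /= /top last_rcons.
  by rewrite run_weight_nil; exact: wge_nil.
have [Hall|[r1 [x [r2 [Er Px Hr2]]]]] :=
  split_last (fun p : edge Q G * cf => p.2.1 == rcons s g) r.
- case: r Hn Hr Hf Hall => [|[e [st' q']] r'] Hn Hr Hf Hall.
    exists [::]; split => //.
      by rewrite /wend /= /top last_rcons.
    by rewrite run_weight_nil; exact: wge_nil.
  have Hn' : (size r' <= n)%N by [].
  clear Hn; move: Hr => /= [Hs Hr'].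
  move: Hf; rewrite /first_local_min /= => /andP [Hp1 Hf'].
  move: Hall => /= /andP [Hne Hall'].
  have [z [Ez Est]] := first_push (rcons_nn s g) Hs Hp1 Hne.
  simpl in Est; subst st'.
  have Hf2 : first_local_min (rcons (rcons s g) z, q') r'.
    apply: (inv_above Hr') => //=; first exact: prefix_refl.
    by rewrite all_map; apply: sub_all Hall' => -[e' c''] /=.
  have [ps [Hw He Hg]] := IH r' (rcons s g) z q' Hn' Hr' Hf2.
  exists (((q', z), Fin (w A e)) :: ps); split.
  + split => //; right.
    move: Hs => [HE Hsrc Htop Hdst _]; rewrite /top last_rcons /= in Htop.
    by case: e Ez HE Hsrc Htop Hdst Hf' Hr' Hne => a b c d /= -> HE <- <- <-.
  + by rewrite /wend /= -He.
  + by rewrite run_weight_cons; apply: wge_cons => //=; rewrite lexx.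
- subst r; move/eqP: Px => Px.
  move: Hr; rewrite -cat_rcons is_run_cat => -[Hrr Hr2'].
  move: Hf; rewrite -cat_rcons flm_cat => /andP [Hfr Hf2].
  have Ex : run_end (rcons s g, q) (rcons r1 x) = x.2 by rewrite /run_end map_rcons last_rcons.
  rewrite Ex in Hr2'.
  set r0 := map (reloc (size s) [:: bot A]) (rcons r1 x).
  have E0 : rlc (size s) [:: bot A] (rcons s g, q) = ([:: bot A; g], q).
    by rewrite /rlc /= -cats1 drop_size_cat.
  have Hnd : nd_path A q g x.2.2 r0.
    split.
    + rewrite -E0; apply: (@reloc_run s [:: bot A] g) => //; exact: prefix_refl.
    + have := @reloc_flm s [:: bot A] [:: g] (rcons r1 x).
      by rewrite cats1 => /(_ Hfr).
    + rewrite -E0 reloc_end Ex /rlc Px /= -cats1 drop_size_cat //.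
  have [v [Hv Hvw]] := summary_exists Hnd.
  have Hn2 : (size r2 <= n)%N by move: Hn; rewrite size_cat /=; lia.
  have Hx2 : x.2 = (rcons s g, x.2.2) by rewrite -Px; case: (x.2).
  rewrite Hx2 in Hr2'.
  have [ps [Hw He Hg]] := IH r2 s g x.2.2 Hn2 Hr2' Hf2.
  exists (((x.2.2, g), v) :: ps); split.
  + by split => //; left.
  + by rewrite /wend /= run_end_cat Ex Hx2 -He.
  + rewrite run_weight_cat; apply: wge_cons => //.
    by rewrite -(reloc_weight (size s) [:: bot A]).
Qed.

Lemma my_nth_belast (T : Type) (d u : T) s i : (i < size s)%N ->
  nth d (belast u s) i = nth d (u :: s) i.
Proof. by elim: s u i => // y s IH u [|i] //= Hi; rewrite IH. Qed.

Lemma last_take_nth (T : Type) (d u : T) M i : (i <= size M)%N ->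
  last u (take i M) = nth d (u :: M) i.
Proof. by elim: M u i => [|y M IH] u [|i] //= Hi; exact: IH. Qed.

Lemma wend_take u ps i : (i <= size ps)%N -> wend u (take i ps) = nth u (u :: map fst ps) i.
Proof. by move=> Hi; rewrite /wend map_take (@last_take_nth _ u) // size_map. Qed.

Lemma wpath_nth d u ps i : wpath u ps -> (i < size ps)%N ->
  gr_edge A (nth d (u :: map fst ps) i) (nth d (map fst ps) i) (nth Omega (map snd ps) i).
Proof.
elim: ps u i => // [[v x]] ps IH u [|i] /= [He Hw] Hi //.
exact: IH.
Qed.

Lemma pos_eq xs : positive_cycle xs = has isO xs || (0 < \sum_(x <- xs) finv x).
Proof. by []. Qed.

Lemma pos_split (ps1 ps2 ps3 : seq (V * ext)) : positive_cycle (map snd (ps1 ++ ps2 ++ ps3)) ->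
  positive_cycle (map snd ps2) \/ positive_cycle (map snd (ps1 ++ ps3)).
Proof.
rewrite !pos_eq !map_cat !has_cat !big_cat /=.
case: (has isO (map snd ps1)); first by right.
case: (has isO (map snd ps2)); first by left.
case: (has isO (map snd ps3)); first by right; rewrite orbT.
rewrite /= => H.
have [H2|H2] := boolP (0 < \sum_(x <- map snd ps2) finv x); first by left.
right; move: H H2; rewrite -leNgt; set a := \sum_(_ <- _ ps1) _; set b := \sum_(_ <- _ ps2) _; set c := \sum_(_ <- _ ps3) _; lia.
Qed.

Lemma reach_edge u v x z : gr_reach A z u -> gr_edge A u v x -> gr_reach A z v.
Proof.
elim=> [u' He|u' v' z' x' He' _ IH He]; first by apply: gr_step He (gr_refl _ _).
exact: gr_step He' (IH He).
Qed.

Lemma reach_wpath z u ps : gr_reach A z u -> wpath u ps ->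
  forall v, v \in u :: map fst ps -> gr_reach A z v.
Proof.
elim: ps u => [|[v x] ps IH] u Hu /=.
  by move=> _ v; rewrite inE => /eqP ->.
move=> [He Hw] v'; rewrite inE => /orP [/eqP -> //|].
by apply: IH => //; apply: reach_edge He.
Qed.

Lemma extract k : forall ps u, (size ps <= k)%N -> (0 < size ps)%N -> wpath u ps ->
  wend u ps = u -> positive_cycle (map snd ps) ->
  (forall v, v \in u :: map fst ps -> gr_reach A (q0 A, bot A) v) ->
  has_reachable_positive_simple_cycle A.
Proof.
elim: k => [|k IH] ps u Hk Hp Hw He Hpos Hr; first by case: ps Hk Hp {Hw He Hpos Hr}.
set M := map fst ps.
have [Hu|Hnu] := boolP (uniq (belast u M)).
  exists (belast u M), (map snd ps); split => //.
  - split; rewrite ?size_belast ?size_map //.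
    move=> i Hi; rewrite ?size_belast ?size_map in Hi *.
    rewrite my_nth_belast ?size_map //.
    have -> : nth (q0 A, bot A) (belast u M) (i.+1 %% size ps) = nth (q0 A, bot A) M i.
      have [Hi1|Hi1] := ltnP i.+1 (size ps).
        by rewrite modn_small // my_nth_belast ?size_map.
      rewrite (_ : i.+1 = size ps); last by move: Hi Hi1; lia.
      rewrite modnn; transitivity u.
        have : (0 < size M)%N by rewrite size_map.
        by case: (M).
      rewrite (_ : i = (size M).-1); last by rewrite size_map; move: Hi Hi1; lia.
      rewrite (set_nth_default u); last by rewrite size_map; move: Hp; lia.
      rewrite (nth_last u M) /M; rewrite /wend in He; by rewrite He.
    exact: (wpath_nth _ Hw Hi).
  - exists u.
      have : (0 < size M)%N by rewrite size_map.
      by case: (M) => //= *; rewrite mem_head.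
    by apply: Hr; rewrite inE eqxx.
case/(uniqPn u): Hnu => i [j [Hij Hj Eij]].
rewrite size_belast size_map in Hj.
have Hi : (i < size ps)%N by apply: ltn_trans Hij Hj.
rewrite !my_nth_belast ?size_map // in Eij.
set y := nth u (u :: M) i in Eij.
have Ewi : wend u (take i ps) = y by rewrite wend_take // ltnW.
have Ewj : wend u (take j ps) = y by rewrite wend_take ?Eij // ltnW.
set ps1 := take i ps; set ps2 := drop i (take j ps); set ps3 := drop j ps.
have Etj : take j ps = ps1 ++ ps2 by rewrite /ps1 -(take_takel _ (ltnW Hij)) cat_take_drop.
have Eps : ps = ps1 ++ ps2 ++ ps3 by rewrite catA -Etj cat_take_drop.
have Hs2 : size ps2 = (j - i)%N by rewrite /ps2 size_drop size_takel // ltnW.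
have Hs13 : size (ps1 ++ ps3) = (i + (size ps - j))%N by rewrite size_cat size_takel ?size_drop // ltnW.
move: Hw; rewrite Eps !wpath_cat -/ps1 Ewi => -[Hw1 [Hw2 Hw3]].
rewrite -Ewi -wend_cat -Etj Ewj in Hw3.
have Hm : forall v, v \in map fst ps1 ++ map fst ps2 ++ map fst ps3 -> v \in M.
  by move=> v Hv; rewrite /M [in X in _ \in X]Eps !map_cat.
have Hy : y \in u :: M by rewrite /y mem_nth //= size_map ltnS ltnW.
have Hpos0 : positive_cycle (map snd (ps1 ++ ps2 ++ ps3)) by rewrite -Eps.
case: (pos_split Hpos0) => Hpos'.
- apply: (IH ps2 y) => //.
  + by rewrite Hs2; move: Hk Hij Hj; lia.
  + by rewrite Hs2 subn_gt0.
  + by rewrite -Ewi -wend_cat -Etj Ewj.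
  + move=> v; rewrite inE => /orP [/eqP -> |Hv]; first exact: Hr.
    by apply: Hr; rewrite inE Hm ?orbT // !mem_cat Hv orbT.
- apply: (IH (ps1 ++ ps3) u) => //.
  + by rewrite Hs13; move: Hk Hij Hj; lia.
  + by rewrite Hs13; move: Hij Hj; lia.
  + by rewrite wpath_cat Ewi.
  + by rewrite wend_cat Ewi -Ewj -wend_cat /ps3 cat_take_drop.
  + move=> v; rewrite inE => /orP [/eqP -> |Hv]; first by apply: Hr; rewrite inE eqxx.
    apply: Hr; rewrite inE Hm ?orbT //; move: Hv; rewrite map_cat !mem_cat.
    by case/orP => ->; rewrite ?orbT.
Qed.

Lemma end_prop (P : cf -> bool) c (r : run) : P c -> all P (map snd r) -> P (run_end c r).
Proof. by elim: r c => //= [[e c']] r IH c _ /andP [H1 H2]; apply: IH. Qed.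

Lemma dir1 : has_reachable_good_cycle A -> has_reachable_positive_simple_cycle A.
Proof.
move=> [c [r [[r0 [Hr0 Ec]] [Hr Hw Hf Hq Ht]]]].
have Hb0 := bot_inv Hr0 (prefix_refl _).
have [ps0 [Hw0 He0 _]] := @decomp (size r0) r0 [::] (bot A) (q0 A) (leqnn _) Hr0 Hb0.
rewrite Ec in He0.
have Hreach0 : gr_reach A (q0 A, bot A) (c.2, top A c.1).
  rewrite -He0; apply: (reach_wpath (gr_refl _ _) Hw0); exact: mem_last.
have : prefix [:: bot A] c.1 by rewrite -Ec; apply: (@end_prop (fun c' : cf => prefix [:: bot A] c'.1)) => //; exact: prefix_refl.
clear He0 Hw0; case: c Hr Hw Hf Hq Ht Hreach0 Ec => st q Hr Hw Hf Hq Ht Hreach0 Ec /= /prefixP [t Est].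
have Est' : st = rcons (belast (bot A) t) (top A st) by rewrite Est /top /= -lastI.
rewrite Est' in Hr Hf Hq Ht.
have [ps [Hwp Hep Hgp]] :=
  @decomp (size r) r (belast (bot A) t) (top A st) q (leqnn _) Hr Hf.
rewrite Hq Ht /top last_rcons -/(top A st) in Hep.
have Hps : (0 < size ps)%N.
  case: ps Hwp Hep Hgp => //= _ _; rewrite /wge /= /wsum big_nil => /= Hle.
  by move: Hw; rewrite ltNge Hle.
apply: (@extract (size ps) ps (q, top A st)) => //.
- rewrite pos_eq; move: Hgp; rewrite /wge /wsum; case: (has _ _) => //= Hle.
  exact: lt_le_trans Hw Hle.
- by apply: reach_wpath.
Qed.

Lemma realize_edge u v x (s : seq G) (N : int) : gr_edge A u v x ->
  exists r s', [/\ is_run A (rcons s u.2, u.1) r, first_local_min (rcons s u.2, u.1) r,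
     run_end (rcons s u.2, u.1) r = (rcons s' v.2, v.1),
     prefix (rcons s u.2) (rcons s' v.2) &
     (if x is Fin m then run_weight A r = m else N <= run_weight A r)].
Proof.
case: u v => q1 g [q2 g2] [[/= Eg Hs]|[/= HE ->]].
- subst g2.
  have Hnd : exists r0, nd_path A q1 g q2 r0 /\
      (if x is Fin m then run_weight A r0 = m else N <= run_weight A r0).
    case: x Hs => [H|m [[r0 [H1 H2]] _]]; last by exists r0.
    by have [r0 [H1 H2]] := H N; exists r0.
  have [r0 [[Hr0 Hf0 He0] Hwt]] := Hnd.
  have E0 : rlc 1 s ([:: bot A; g], q1) = (rcons s g, q1) by rewrite /rlc /= cats1.
  exists (map (reloc 1 s) r0), s; split => //.
  + rewrite -E0; apply: (@reloc_run [:: bot A] s g) => //; exact: prefix_refl.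
  + have := @reloc_flm [:: bot A] s [:: g] r0 Hf0.
    by rewrite /first_local_min /= cats1.
  + by rewrite -E0 reloc_end He0 /rlc /= cats1.
  + exact: prefix_refl.
  + by rewrite reloc_weight.
- set e := Edge q1 g q2 (Push g2).
  exists [:: (e, (rcons (rcons s g) g2, q2))], (rcons s g); split => //=.
  + by split => //; split => //; rewrite /top last_rcons.
  + by rewrite /first_local_min /= prefix_rcons.
  + by rewrite prefix_rcons.
  + by rewrite run_weight_cons run_weight_nil addr0.
Qed.

Lemma reachable_ext c (r : run) : reachable A c -> is_run A c r -> reachable A (run_end c r).
Proof.
move=> [r0 [Hr0 <-]] Hr; exists (r0 ++ r); split; last by rewrite run_end_cat.
by rewrite is_run_cat.
Qed.

Lemma realize_reach u z : gr_reach A u z ->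
  forall s, reachable A (rcons s u.2, u.1) -> exists s', reachable A (rcons s' z.2, z.1).
Proof.
elim=> [u' s H|u' v z' x He _ IH s H]; first by exists s.
have [r [s' [Hr _ Hend _ _]]] := realize_edge s 0 He.
apply: (IH s'); rewrite -Hend; exact: reachable_ext.
Qed.

Definition valB (B : int) (x : ext) : int := if x is Fin m then m else B.

Lemma sumO_ge (B : int) xs : 0 <= B -> has isO xs ->
  B <= \sum_(x <- xs) (if isO x then B else 0).
Proof.
move=> HB; elim: xs => //= y ys IH; rewrite big_cons.
case: (isO y) => /= [_|/IH]; last by rewrite add0r.
have : 0 <= \sum_(x <- ys) (if isO x then B else 0) by apply: sumr_ge0 => x _; case: (isO x).
by move=> H; rewrite lerDl.
Qed.

Lemma sumO_0 (B : int) xs : ~~ has isO xs -> \sum_(x <- xs) (if isO x then B else 0) = 0.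
Proof.
elim: xs => [|y ys IH]; rewrite ?big_nil ?big_cons //=.
by case: (isO y) => //= /IH ->; rewrite addr0.
Qed.

Lemma sumfin_ge xs : - \sum_(y <- xs) `|finv y| <= \sum_(x <- xs) finv x.
Proof.
elim: xs => [|y ys IH]; rewrite ?big_nil ?big_cons ?oppr0 //.
by rewrite opprD; apply: lerD => //; exact: lerNnormlW.
Qed.

Lemma posval xs : positive_cycle xs ->
  0 < \sum_(x <- xs) valB (1 + \sum_(y <- xs) `|finv y|) x.
Proof.
set B := 1 + _.
have HB : 1 <= B by rewrite /B lerDl; apply: sumr_ge0.
have E : \sum_(x <- xs) valB B x =
    \sum_(x <- xs) finv x + \sum_(x <- xs) (if isO x then B else 0).
  by rewrite -big_split /=; apply: eq_bigr => -[|m] _ /=; rewrite ?add0r ?addr0.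
have H1 := sumfin_ge xs.
rewrite pos_eq E; case Hh: (has isO xs) => /= H.
- have H2 := sumO_ge (le_trans ler01 HB) Hh.
  apply: lt_le_trans (lerD H1 H2).
  by rewrite /B addrCA addNr addr0 ltr01.
- by rewrite sumO_0 ?Hh // addr0.
Qed.

Local Notation dd := (q0 A, bot A).

Lemma cycle_real vs xs s0 (B : int) : simple_cycle A vs xs ->
  forall j, (j <= size vs)%N -> exists r s',
   [/\ is_run A (rcons s0 (nth dd vs 0).2, (nth dd vs 0).1) r,
       first_local_min (rcons s0 (nth dd vs 0).2, (nth dd vs 0).1) r,
       run_end (rcons s0 (nth dd vs 0).2, (nth dd vs 0).1) r =
          (rcons s' (nth dd vs (j %% size vs)).2, (nth dd vs (j %% size vs)).1),
       prefix (rcons s0 (nth dd vs 0).2) (rcons s' (nth dd vs (j %% size vs)).2) &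
       \sum_(0 <= i < j) valB B (nth Omega xs i) <= run_weight A r].
Proof.
move=> [Hk Hsz Hu Hedge]; elim=> [|j IH] Hj.
  exists [::], s0; split => //; rewrite ?mod0n ?prefix_refl //.
  by rewrite big_mkord big_ord0 run_weight_nil.
have [r [s' [Hr Hf He Hp Hw]]] := IH (ltnW Hj).
rewrite modn_small // in He Hp.
have [r2 [s'' [Hr2 Hf2 He2 Hp2 Hw2]]] := realize_edge s' B (Hedge j Hj).
exists (r ++ r2), s''; split.
- by rewrite is_run_cat He.
- rewrite flm_cat Hf /=; move: Hf2; rewrite /first_local_min.
  apply: sub_all => c' /= H; exact: prefix_trans Hp H.
- by rewrite run_end_cat He.
- exact: prefix_trans Hp Hp2.
- rewrite big_nat_recr // run_weight_cat; apply: lerD => //.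
  by case: (nth Omega xs j) Hw2 => [|m] /= ->.
Qed.

Lemma dir2 : has_reachable_positive_simple_cycle A -> has_reachable_good_cycle A.
Proof.
move=> [vs [xs [Hsc Hpos [v Hv Hrv]]]].
have Hsc' := Hsc; case: Hsc' => Hk Hsz Hu Hedge.
have Hr0 : gr_reach A dd (nth dd vs 0).
  have Hi0 : (index v vs < size vs)%N by rewrite index_mem.
  have Hj : forall j, (index v vs + j < size vs)%N ->
      gr_reach A dd (nth dd vs (index v vs + j)).
    elim=> [|j IH] H; first by rewrite addn0 nth_index.
    have H' : (index v vs + j < size vs)%N by move: H; lia.
    have := Hedge _ H'; rewrite modn_small; last by move: H; lia.
    rewrite addnS; exact: reach_edge (IH H').
  have Hlt : ((size vs).-1 < size vs)%N by rewrite ltn_predL.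
  have := Hj ((size vs).-1 - index v vs)%N; rewrite subnKC; last by move: Hi0; lia.
  move=> /(_ Hlt) Hl.
  have := Hedge _ Hlt; rewrite prednK // modnn.
  exact: reach_edge Hl.
have Hinit : reachable A (rcons [::] dd.2, dd.1) by exists [::].
have [s0 Hs0] := realize_reach Hr0 Hinit.
have [r [s' [Hr Hf He Hp Hw]]] :=
  cycle_real s0 (1 + \sum_(y <- xs) `|finv y|) Hsc (leqnn (size vs)).
rewrite modnn in He Hp.
exists (rcons s0 (nth dd vs 0).2, (nth dd vs 0).1), r; split => //; split => //.
- apply: lt_le_trans Hw; rewrite -Hsz -(big_nth Omega xpredT (valB _)).
  exact: posval.
- by rewrite He.
- by rewrite He /top !last_rcons.
Qed.

End Proof5.

Theorem lemma5 (Q G : finType) (A : wps Q G) (HA : wf_wps A) :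
  has_reachable_good_cycle A <-> has_reachable_positive_simple_cycle A.
Proof.
split; [exact: (dir1 HA) | exact: dir2].
Qed.
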